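(* Let $n\ge0$ be an integer, $N=2^{n+1}$, and consider the 1D-Tree over the uniform dataset $\{0,\dots,N-1\}$ (described in the context). Let $s$ be a real number with $1<s\le N$, $\kappa=\lfloor\log_2(N/s)\rfloor$ (so $2^{n-\kappa}<s\le2^{n-\kappa+1}$), and $Q=[x,x+s)$ with $x\in[0,N-s]$. Then $\mathrm{level}_{\mathrm{Tree}}(Q)\in\{0,\dots,\kappa\}$, and: (i) for $\ell\in\{0,\dots,\kappa-1\}$, $\mathrm{level}_{\mathrm{Tree}}(Q)=\ell$ if $x\in\bigl(m2^{n-\ell}-s,\ m2^{n-\ell}\bigr)$ for some odd $m\in\{1,3,\dots,2^{\ell+1}-1\}$ (that is, if $Q$ straddles a primitive boundary point of level $\ell+1$ but no primitive boundary point of level $\le\ell$); (ii) $\mathrm{level}_{\mathrm{Tree}}(Q)=\kappa$ if $x\in\bigl[m2^{n-\kappa+1},\ (m+1)2^{n-\kappa+1}-s\bigr]$ for some $m\in\{0,1,\dots,2^\kappa-1\}$.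
   Context: The 1D-Tree over $\mathcal{D}=\{0,\dots,N-1\}\subset[0,N)$ has levels $\ell=0,\dots,n+1$; its level-$\ell$ nodes are the $2^\ell$ intervals $[m2^{n-\ell+1},(m+1)2^{n-\ell+1})$, $m=0,\dots,2^\ell-1$; each node's children are its left and right halves. SRC-search returns the deepest node whose interval contains $Q$; $\mathrm{level}_{\mathrm{Tree}}(Q)$ is its level. A primitive boundary point of level $\ell$ is the point splitting a level-$(\ell-1)$ node into its two children, i.e. an odd multiple of $2^{n-\ell+1}$. $Q=[x,x+s)$ straddles a point $p$ if $x<p<x+s$. *)

(* Defs.v *)
From Stdlib Require Import Reals Lra Lia Arith ClassicalEpsilon.
Open Scope R_scope.

Definition node_width (n l : nat) : R := 2 ^ (n + 1 - l).

(* The level-l node of index m is the interval [m w, (m+1) w), w = node_width n l. *)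
Definition node_lo (n l m : nat) : R := INR m * node_width n l.
Definition node_hi (n l m : nat) : R := INR (m + 1) * node_width n l.

(* Q = [x, x+s) (s > 0) is contained in node [a, b) iff a <= x and x + s <= b. *)
Definition node_contains (n l m : nat) (x s : R) : Prop :=
  node_lo n l m <= x /\ x + s <= node_hi n l m.

Definition level_contains (n l : nat) (x s : R) : Prop :=
  exists m : nat, (m < 2 ^ l)%nat /\ node_contains n l m x s.

Fixpoint deepest (n : nat) (x s : R) (k : nat) : nat :=
  match k with
  | O => O
  | S k' =>
      if excluded_middle_informative (level_contains n k x s) then k
      else deepest n x s k'
  end.

(* level_Tree(Q): the level of the deepest node whose interval contains Q
   (the node returned by SRC-search), over levels 0..n+1. *)
Definition levelTree (n : nat) (x s : R) : nat := deepest n x s (n + 1).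

Definition log2R (y : R) : R := ln y / ln 2.

(* Main.v *)
Require Import Defs.
From Stdlib Require Import Reals Lra Lia ClassicalEpsilon.
Open Scope R_scope.

Lemma deepest_le_top n x s top : (deepest n x s top <= top)%nat.
Proof. induction top; simpl; [lia|]. destruct excluded_middle_informative; lia. Qed.

Lemma deepest_le n x s top K :
  (forall k, (K < k <= top)%nat -> ~ level_contains n k x s) ->
  (deepest n x s top <= K)%nat.
Proof.
  induction top; intros H; simpl; [lia|].
  destruct excluded_middle_informative as [c|c].
  - destruct (Nat.le_gt_cases (S top) K); [lia|]. exfalso; apply (H (S top)); auto; lia.
  - apply IHtop. intros k Hk. apply H. lia.
Qed.

Lemma deepest_eq n x s top K : (K <= top)%nat ->
  (K = 0%nat \/ level_contains n K x s) ->
  (forall k, (K < k <= top)%nat -> ~ level_contains n k x s) ->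
  deepest n x s top = K.
Proof.
  induction top; intros HK Hc H; simpl; [lia|].
  destruct (Nat.eq_dec K (S top)) as [e|ne].
  - subst. destruct excluded_middle_informative; auto. destruct Hc; [lia|contradiction].
  - destruct excluded_middle_informative as [c|c].
    + exfalso; apply (H (S top)); auto; lia.
    + apply IHtop; auto; [lia|]. intros k Hk; apply H; lia.
Qed.

Lemma pow2_pos k : 0 < 2 ^ k.
Proof. apply pow_lt; lra. Qed.

Lemma lc_width n L x s : level_contains n L x s -> s <= node_width n L.
Proof.
  intros [m [_ [H1 H2]]]. unfold node_lo, node_hi in *.
  rewrite plus_INR in H2. simpl in H2. lra.
Qed.

Lemma straddle n L l m x s : (l + 1 <= L <= n + 1)%nat ->
  x < INR m * 2 ^ (n - l) < x + s -> ~ level_contains n L x s.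
Proof.
  intros HL Hp [k [_ [H1 H2]]]. unfold node_lo, node_hi, node_width in *.
  set (w := 2 ^ (n + 1 - L)) in *.
  assert (Hw : 0 < w) by apply pow2_pos.
  assert (E : INR m * 2 ^ (n - l) = INR (m * 2 ^ (L - l - 1)) * w).
  { unfold w. rewrite mult_INR, pow_INR, Rmult_assoc, <- pow_add. simpl INR.
    replace (L - l - 1 + (n + 1 - L))%nat with (n - l)%nat by lia. reflexivity. }
  rewrite E in Hp.
  assert (INR k < INR (m * 2 ^ (L - l - 1))).
  { apply Rmult_lt_reg_r with w; lra. }
  apply INR_lt in H.
  assert (INR (k+1) * w <= INR (m * 2 ^ (L - l - 1)) * w).
  { apply Rmult_le_compat_r; [lra|]. apply le_INR; lia. }
  lra.
Qed.

Theorem lemma3 (n : nat) (s x : R) (kappa : nat) :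
  1 < s <= 2 ^ (n + 1) ->
  (* kappa = floor (log2 (N / s)), N = 2^(n+1) *)
  INR kappa <= log2R (2 ^ (n + 1) / s) < INR kappa + 1 ->
  0 <= x <= 2 ^ (n + 1) - s ->
  (levelTree n x s <= kappa)%nat /\
  (forall l m : nat, (l < kappa)%nat -> Nat.odd m = true -> (m < 2 ^ (l + 1))%nat ->
     INR m * 2 ^ (n - l) - s < x < INR m * 2 ^ (n - l) ->
     levelTree n x s = l) /\
  (forall m : nat, (m < 2 ^ kappa)%nat ->
     INR m * 2 ^ (n - kappa + 1) <= x <= INR (m + 1) * 2 ^ (n - kappa + 1) - s ->
     levelTree n x s = kappa).
Proof.
  intros Hs Hk Hx.
  set (y := 2 ^ (n + 1) / s) in *.
  assert (Hy : 0 < y) by (unfold y; apply Rdiv_lt_0_compat; [apply pow2_pos|lra]).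
  assert (ln2 : 0 < ln 2) by (rewrite <- ln_1; apply ln_increasing; lra).
  unfold log2R in Hk.
  assert (A : 2 ^ kappa <= y).
  { destruct (Rle_or_lt (2 ^ kappa) y) as [h|h]; auto. exfalso.
    apply ln_increasing in h; auto. rewrite ln_pow in h by lra.
    destruct Hk as [Hk _]. apply (Rmult_le_compat_r (ln 2)) in Hk; [|lra].
    unfold Rdiv in Hk. rewrite Rmult_assoc, Rinv_l in Hk; lra. }
  assert (B : y < 2 ^ (kappa + 1)).
  { destruct (Rle_or_lt (2 ^ (kappa + 1)) y) as [h|h]; auto. exfalso.
    assert (h' : ln (2 ^ (kappa+1)) <= ln y).
    { destruct h as [h|h]; [left; apply ln_increasing; auto; apply pow2_pos| rewrite h; lra]. }
    rewrite ln_pow, plus_INR in h' by lra. simpl INR in h'.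
    destruct Hk as [_ Hk]. apply (Rmult_lt_compat_r (ln 2)) in Hk; [|lra].
    unfold Rdiv in Hk. rewrite Rmult_assoc, Rinv_l in Hk; lra. }
  unfold y in A, B.
  assert (A' : 2 ^ kappa * s <= 2 ^ (n + 1)).
  { apply (Rmult_le_compat_r s) in A; [|lra]. unfold Rdiv in A.
    rewrite Rmult_assoc, Rinv_l in A; lra. }
  assert (B' : 2 ^ (n + 1) < 2 ^ (kappa + 1) * s).
  { apply (Rmult_lt_compat_r s) in B; [|lra]. unfold Rdiv in B.
    rewrite Rmult_assoc, Rinv_l in B; lra. }
  assert (Kn : (kappa <= n)%nat).
  { destruct (Nat.le_gt_cases kappa n); auto. exfalso.
    assert (2 ^ (n+1) <= 2 ^ kappa) by (apply Rle_pow; lra || lia).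
    pose proof (pow2_pos kappa). nra. }
  assert (Hs1 : s <= 2 ^ (n + 1 - kappa)).
  { replace (n+1)%nat with (kappa + (n+1-kappa))%nat in A' by lia.
    rewrite pow_add in A'. pose proof (pow2_pos kappa).
    pose proof (pow2_pos (n+1-kappa)). nra. }
  assert (Hs2 : 2 ^ (n - kappa) < s).
  { replace (n+1)%nat with ((kappa+1) + (n-kappa))%nat in B' by lia.
    rewrite pow_add in B'. pose proof (pow2_pos (kappa+1)).
    pose proof (pow2_pos (n-kappa)). nra. }
  assert (Deep : forall k, (kappa < k <= n + 1)%nat -> ~ level_contains n k x s).
  { intros k Hk' Hc. apply lc_width in Hc. unfold node_width in Hc.
    assert (2 ^ (n + 1 - k) <= 2 ^ (n - kappa)) by (apply Rle_pow; lra || lia). lra. }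
  split; [|split].
  - apply deepest_le. exact Deep.
  - intros l m Hl Hm Hml Hxm. unfold levelTree. apply deepest_eq; [lia| |].
    + right. apply Nat.odd_spec in Hm. destruct Hm as [j Hj]. subst m.
      exists j. split.
      { rewrite Nat.pow_add_r in Hml. simpl in Hml. lia. }
      unfold node_contains, node_lo, node_hi, node_width.
      replace (n + 1 - l)%nat with (S (n - l)) by lia. simpl.
      assert (2 ^ (n + 1 - kappa) <= 2 ^ (n - l)) by (apply Rle_pow; lra || lia).
      rewrite plus_INR, mult_INR in Hxm. rewrite plus_INR. simpl INR in *.
      pose proof (pow2_pos (n - l)). nra.
    + intros k Hk'. apply (straddle n k l m); lia || lra.
  - intros m Hm Hxm. unfold levelTree. apply deepest_eq; [lia| |exact Deep].
    right. exists m. split; auto. unfold node_contains, node_lo, node_hi, node_width.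
    replace (n + 1 - kappa)%nat with (n - kappa + 1)%nat by lia. lra.
Qed.
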